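(* Let $\varepsilon>0$ and $\theta,\bar\theta,\varphi,\bar\varphi,\alpha,\bar\alpha\in\mathbb{R}$ with $|\theta-\bar\theta|,|\varphi-\bar\varphi|,|\alpha-\bar\alpha|\le\varepsilon$. Then \[ \|R(\alpha)M(\theta,\varphi)-R(\bar\alpha)M(\bar\theta,\bar\varphi)\|<\sqrt5\varepsilon. \]
   Context: $R(\alpha)=\begin{pmatrix}\cos\alpha&-\sin\alpha\\ \sin\alpha&\cos\alpha\end{pmatrix}$, $M(\theta,\varphi)=\begin{pmatrix}-\sin\theta&\cos\theta&0\\ -\cos\theta\cos\varphi&-\sin\theta\cos\varphi&\sin\varphi\end{pmatrix}$; $\|\cdot\|$ is the operator norm induced by Euclidean norms. *)

(* Defs.v *)
From HB Require Import structures.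
From mathcomp Require Import all_boot all_order all_algebra.
From mathcomp Require Import all_classical all_reals all_analysis.
Set Implicit Arguments. Unset Strict Implicit. Unset Printing Implicit Defensive.
Import Order.TTheory GRing.Theory Num.Theory.
Local Open Scope ring_scope.
Local Open Scope classical_set_scope.

Definition enorm {R : realType} {n : nat} (x : 'cV[R]_n) : R :=
  Num.sqrt (\sum_(i < n) x i 0 ^+ 2).

Definition opnorm {R : realType} {m n : nat} (A : 'M[R]_(m, n)) : R :=
  sup [set enorm (A *m x) | x in [set x : 'cV[R]_n | enorm x <= 1]].

Definition rotR {R : realType} (a : R) : 'M[R]_2 :=
  \matrix_(i < 2, j < 2)
    if (i == 0 :> nat) then (if (j == 0 :> nat) then cos a else - sin a)
    else (if (j == 0 :> nat) then sin a else cos a).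

Definition Mtp {R : realType} (t p : R) : 'M[R]_(2, 3) :=
  \matrix_(i < 2, j < 3)
    if (i == 0 :> nat) then
      (if (j == 0 :> nat) then - sin t else if (j == 1 :> nat) then cos t else 0)
    else
      (if (j == 0 :> nat) then - (cos t * cos p)
       else if (j == 1 :> nat) then - (sin t * cos p) else sin p).

(* Main.v *)
Require Import Defs.
From HB Require Import structures.
From mathcomp Require Import all_boot all_order all_algebra.
From mathcomp Require Import all_classical all_reals all_analysis.
From mathcomp Require Import ring lra.
Import Order.TTheory GRing.Theory Num.Theory numFieldNormedType.Exports.
Local Open Scope ring_scope.

Definition qmul {R : realType} (p q : R * R * R * R) : R * R * R * R :=
  let '(a1, b1, c1, d1) := p in let '(a2, b2, c2, d2) := q in
  (a1*a2 - b1*b2 - c1*c2 - d1*d2, a1*b2 + b1*a2 + c1*d2 - d1*c2,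
   a1*c2 - b1*d2 + c1*a2 + d1*b2, a1*d2 + b1*c2 - c1*b2 + d1*a2).

Definition Qrot {R : realType} (q : R * R * R * R) (v : R * R * R) : R * R * R :=
  let '(w, x, y, z) := q in let '(v1, v2, v3) := v in
  ((w*w+x*x-y*y-z*z)*v1+2*(x*y-w*z)*v2+2*(x*z+w*y)*v3,
   2*(x*y+w*z)*v1+(w*w-x*x+y*y-z*z)*v2+2*(y*z-w*x)*v3,
   2*(x*z-w*y)*v1+2*(y*z+w*x)*v2+(w*w-x*x-y*y+z*z)*v3).

Lemma Qrot_mul {R : realType} (p q : R * R * R * R) v :
  Qrot (qmul p q) v = Qrot p (Qrot q v).
Proof.
case: p => [[[a1 b1] c1] d1]; case: q => [[[a2 b2] c2] d2]; case: v => [[v1 v2] v3].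
rewrite /=; congr (_, _, _); ring.
Qed.

Lemma half {R : realType} (x : R) :
  cos x = cos (x/2) ^+ 2 - sin (x/2) ^+ 2 /\ sin x = 2 * sin (x/2) * cos (x/2).
Proof.
split; first by rewrite {1}(splitr x) cosD; ring.
by rewrite {1}(splitr x) sinD; ring.
Qed.

Definition Gv {R : realType} (t p a y0 y1 : R) : R * R * R :=
  (y0 * (cos a * - sin t - sin a * - (cos t * cos p))
     + y1 * (sin a * - sin t + cos a * - (cos t * cos p)),
   y0 * (cos a * cos t - sin a * - (sin t * cos p))
     + y1 * (sin a * cos t + cos a * - (sin t * cos p)),
   y0 * (cos a * 0 - sin a * sin p) + y1 * (sin a * 0 + cos a * sin p)).

Definition quat {R : realType} (t p a : R) : R * R * R * R :=
  qmul (cos (t/2), 0, 0, sin (t/2))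
    (qmul (cos (p/2), 0, sin (p/2), 0) (cos (a/2), 0, 0, - sin (a/2))).

Lemma QrotZ {R : realType} (c s w1 w2 w3 : R) : c^+2 + s^+2 = 1 ->
  Qrot (c, 0, 0, s) (w1, w2, w3) =
  ((c^+2 - s^+2) * w1 - 2 * s * c * w2, 2 * s * c * w1 + (c^+2 - s^+2) * w2, w3).
Proof.
move=> u; rewrite /=; congr (_, _, _); try ring.
by rewrite -[RHS]mul1r -u; ring.
Qed.

Lemma QrotY {R : realType} (c s w1 w2 w3 : R) : c^+2 + s^+2 = 1 ->
  Qrot (c, 0, s, 0) (w1, w2, w3) =
  ((c^+2 - s^+2) * w1 + 2 * s * c * w3, w2, - (2 * s * c) * w1 + (c^+2 - s^+2) * w3).
Proof.
move=> u; rewrite /=; congr (_, _, _); try ring.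
by rewrite -[RHS]mul1r -u; ring.
Qed.

Lemma QrotZ0 {R : realType} (c s w1 w2 : R) :
  Qrot (c, 0, 0, - s) (w1, w2, 0) =
  ((c^+2 - s^+2) * w1 + 2 * s * c * w2, - (2 * s * c) * w1 + (c^+2 - s^+2) * w2, 0).
Proof. by rewrite /=; congr (_, _, _); ring. Qed.

Lemma lemB {R : realType} (t p a y0 y1 : R) :
  Gv t p a y0 y1 = Qrot (quat t p a) (- y1, y0, 0).
Proof.
rewrite /quat !Qrot_mul QrotZ0 QrotY ?cos2Dsin2 // QrotZ ?cos2Dsin2 //.
have [ct st] := half t; have [cp sp] := half p; have [ca sa] := half a.
rewrite /Gv ct st cp sp ca sa.
congr (_, _, _); ring.
Qed.
Lemma sin_le_pos {R : realType} (x : R) : 0 <= x -> `|sin x| <= x.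
Proof.
move=> x0.
have [|c _ E] := @MVT_segment R sin cos 0 x x0 (fun y _ => is_derive_sin y).
  exact/continuous_subspaceT/continuous_sin.
move: E; rewrite sin0 subr0 subr0 => ->.
rewrite normrM (ger0_norm x0).
by rewrite ler_piMl // cos_max.
Qed.

Lemma sin_le_abs {R : realType} (x : R) : `|sin x| <= `|x|.
Proof.
have [x0|x0] := leP 0 x; first by rewrite (ger0_norm x0); apply: sin_le_pos.
rewrite -normrN -sinN (ltr0_norm x0); apply: sin_le_pos.
by rewrite oppr_ge0 ltW.
Qed.

Lemma cos_ge {R : realType} (x : R) : 1 - x^+2 / 2 <= cos x.
Proof.
have -> : cos x = 1 - 2 * sin (x/2) ^+ 2.
  rewrite {1}(splitr x) cosD -!expr2 sin2cos2; ring.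
have h := sin_le_abs (x/2).
have h0 : 0 <= `|sin (x/2)| by [].
have : sin (x/2) ^+ 2 <= (x/2)^+2.
  rewrite -[sin _ ^+2]real_normK ?num_real // -[(x/2)^+2]real_normK ?num_real //.
  by rewrite lerXn2r // ?nnegrE.
lra.
Qed.
Definition vd {R : realType} (a b : R * R * R) : R :=
  let '(a1, a2, a3) := a in let '(b1, b2, b3) := b in
  (a1 - b1)^+2 + (a2 - b2)^+2 + (a3 - b3)^+2.

Definition vsub {R : realType} (a b : R * R * R) : R * R * R :=
  let '(a1, a2, a3) := a in let '(b1, b2, b3) := b in (a1 - b1, a2 - b2, a3 - b3).
Definition vdot {R : realType} (a : R * R * R) (x0 x1 x2 : R) : R :=
  let '(a1, a2, a3) := a in a1 * x0 + a2 * x1 + a3 * x2.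

Lemma scal {R : realType} (P Q : R * R * R) (X0 X1 X2 B : R) : 0 <= B ->
  X0^+2 + X1^+2 + X2^+2 <= 1 ->
  (forall y0 y1 : R, let '(p1, p2, p3) := P in let '(q1, q2, q3) := Q in
     (y0 * p1 + y1 * q1)^+2 + (y0 * p2 + y1 * q2)^+2 + (y0 * p3 + y1 * q3)^+2
       <= B^+2 * (y0^+2 + y1^+2)) ->
  Num.sqrt (vdot P X0 X1 X2 ^+ 2 + vdot Q X0 X1 X2 ^+ 2) <= B.
Proof.
case: P => [[p1 p2] p3]; case: Q => [[q1 q2] q3] B0 Xn K /=.
set Y0 := p1 * X0 + p2 * X1 + p3 * X2.
set Y1 := q1 * X0 + q2 * X1 + q3 * X2.
have KY := K Y0 Y1.
set S := Y0^+2 + Y1^+2.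
set e1 := Y0 * p1 + Y1 * q1. set e2 := Y0 * p2 + Y1 * q2. set e3 := Y0 * p3 + Y1 * q3.
have SE : S = e1 * X0 + e2 * X1 + e3 * X2 by rewrite /S /e1 /e2 /e3 /Y0 /Y1; ring.
have CS : (e1 * X0 + e2 * X1 + e3 * X2)^+2 <= (e1^+2 + e2^+2 + e3^+2) * (X0^+2 + X1^+2 + X2^+2).
  have : 0 <= (e1 * X1 - e2 * X0)^+2 + (e1 * X2 - e3 * X0)^+2 + (e2 * X2 - e3 * X1)^+2.
    by rewrite !addr_ge0 ?sqr_ge0.
  move=> h; rewrite -subr_ge0; apply: (le_trans h); rewrite le_eqVlt; apply/orP; left; apply/eqP; ring.
have S0 : 0 <= S by rewrite /S addr_ge0 ?sqr_ge0.
have e0 : 0 <= e1^+2 + e2^+2 + e3^+2 by rewrite !addr_ge0 ?sqr_ge0.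
have SS : S * S <= B^+2 * S.
  have -> : S * S = (e1 * X0 + e2 * X1 + e3 * X2)^+2 by rewrite -SE expr2.
  apply: (le_trans CS).
  apply: (le_trans (ler_wpM2l e0 Xn)); rewrite mulr1.
  exact: KY.
have SB : S <= B^+2.
  have [->|Sp] := eqVneq S 0; first by rewrite sqr_ge0.
  have Sp' : 0 < S by rewrite lt_neqAle eq_sym Sp S0.
  by rewrite -(ler_pM2r Sp').
by rewrite -(ger0_norm B0) -sqrtr_sqr ler_sqrt // sqr_ge0.
Qed.

Lemma opnorm_le {R : realType} (t p a t' p' a' B : R) : 0 <= B ->
  (forall y0 y1, vd (Gv t p a y0 y1) (Gv t' p' a' y0 y1) <= B^+2 * (y0^+2 + y1^+2)) ->
  opnorm (rotR a *m Mtp t p - rotR a' *m Mtp t' p') <= B.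
Proof.
move=> B0 K.
rewrite /opnorm; apply: ge_sup.
  exists (enorm ((rotR a *m Mtp t p - rotR a' *m Mtp t' p') *m 0)); exists 0 => //=.
  rewrite /enorm big1 ?sqrtr0 // => i _; by rewrite mxE expr2 mul0r.
move=> _ [x xn <-].
rewrite /enorm !big_ord_recr !big_ord0 /= !mxE !big_ord_recr !big_ord0 /= !mxE.
rewrite !big_ord_recr !big_ord0 /= !mxE /=.
set X0 := x (widen_ord _ (widen_ord _ _)) 0.
set X1 := x (widen_ord _ ord_max) 0.
set X2 := x ord_max 0.
match goal with |- is_true (Order.le (?f ?e) _) =>
  have -> : e = vdot (vsub (Gv t p a 1 0) (Gv t' p' a' 1 0)) X0 X1 X2 ^+ 2
                + vdot (vsub (Gv t p a 0 1) (Gv t' p' a' 0 1)) X0 X1 X2 ^+ 2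
  by rewrite /Gv /=; ring end.
apply: scal => //.
  move: xn; rewrite /= /enorm !big_ord_recr big_ord0 /= -/X0 -/X1 -/X2 add0r.
  rewrite -[X in Num.sqrt _ <= X]sqrtr1 ler_sqrt //.
move=> y0 y1; have := K y0 y1; rewrite /Gv /=.
match goal with |- is_true (Order.le ?l1 ?r) -> is_true (Order.le ?l2 ?r) =>
  have -> : l2 = l1 by ring end.
by [].
Qed.

Definition qn {R : realType} (q : R * R * R * R) : R :=
  let '(w, x, y, z) := q in w^+2 + x^+2 + y^+2 + z^+2.
Definition qdot {R : realType} (q q' : R * R * R * R) : R :=
  let '(w, x, y, z) := q in let '(w', x', y', z') := q' in w*w' + x*x' + y*y' + z*z'.
Definition vn {R : realType} (v : R * R * R) : R :=
  let '(v1, v2, v3) := v in v1^+2 + v2^+2 + v3^+2.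

Lemma lemA {R : realType} (q q' : R * R * R * R) (v : R * R * R) :
  qn q = 1 -> qn q' = 1 ->
  vd (Qrot q v) (Qrot q' v) <= 4 * (1 - qdot q q' ^+ 2) * vn v.
Proof.
case: q => [[[w x] y] z]; case: q' => [[[w' x'] y'] z']; case: v => [[v1 v2] v3].
rewrite /= => n1 n2.
set u := w*w'+x*x'+y*y'+z*z'.
pose r1 := w*x' - x*w' - y*z' + z*y'.
pose r2 := w*y' + x*z' - y*w' - z*x'.
pose r3 := w*z' - x*y' + y*x' - z*w'.
match goal with |- is_true (Order.le ?l _) =>
  have -> : l = ((w^+2+x^+2+y^+2+z^+2)^+2 + (w'^+2+x'^+2+y'^+2+z'^+2)^+2) * (v1^+2+v2^+2+v3^+2)
    - 2 * (u^+2 - (r1^+2+r2^+2+r3^+2)) * (v1^+2+v2^+2+v3^+2) - 4 * (r1*v1+r2*v2+r3*v3)^+2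
  by rewrite /u /r1 /r2 /r3; ring end.
have E2 : u^+2 + (r1^+2+r2^+2+r3^+2) = (w^+2+x^+2+y^+2+z^+2) * (w'^+2+x'^+2+y'^+2+z'^+2).
  rewrite /u /r1 /r2 /r3; ring.
rewrite n1 n2 in E2 *.
have -> : r1^+2+r2^+2+r3^+2 = 1 - u^+2 by move: E2; rewrite mulr1 => E2; rewrite -E2; ring.
have : 0 <= (r1*v1+r2*v2+r3*v3)^+2 by apply: sqr_ge0.
lra.
Qed.

Lemma qn_mul {R : realType} (p q : R * R * R * R) : qn (qmul p q) = qn p * qn q.
Proof.
case: p => [[[a1 b1] c1] d1]; case: q => [[[a2 b2] c2] d2]; rewrite /=; ring.
Qed.

Lemma qn_quat {R : realType} (t p a : R) : qn (quat t p a) = 1.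
Proof.
rewrite /quat !qn_mul /=.
transitivity ((cos (t/2)^+2 + sin (t/2)^+2) * ((cos (p/2)^+2 + sin (p/2)^+2)
   * (cos (a/2)^+2 + sin (a/2)^+2))); first ring.
by rewrite !cos2Dsin2 !mulr1.
Qed.

Lemma lemU {R : realType} (t p a t' p' a' : R) :
  qdot (quat t p a) (quat t' p' a') =
  cos (p/2 - p'/2) * cos (t/2 - t'/2) * cos (a/2 - a'/2)
  + cos (p/2 + p'/2) * sin (t/2 - t'/2) * sin (a/2 - a'/2).
Proof. rewrite !cosB !sinB cosD /quat /=; ring. Qed.

Lemma lemK {R : realType} (t p a t' p' a' y0 y1 : R) :
  vd (Gv t p a y0 y1) (Gv t' p' a' y0 y1)
    <= 4 * (1 - qdot (quat t p a) (quat t' p' a') ^+ 2) * (y0^+2 + y1^+2).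
Proof.
rewrite !lemB.
have -> : y0^+2 + y1^+2 = vn (- y1, y0, 0) by rewrite /= sqrrN expr0n /= addr0 addrC.
by apply: lemA; apply: qn_quat.
Qed.

Lemma half_bnd {R : realType} (t t' e : R) : `|t - t'| <= e -> `|t/2 - t'/2| <= e/2.
Proof.
move=> h; have -> : t/2 - t'/2 = (t - t') / 2 by rewrite mulrBl.
rewrite normrM (@ger0_norm _ (2^-1)) ?invr_ge0 //.
by rewrite ler_pM2r // invr_gt0.
Qed.

Lemma cos_bnd {R : realType} (z h : R) : `|z| <= h -> 1 - h^+2/2 <= cos z.
Proof.
move=> hz; apply: le_trans (cos_ge z).
have : z^+2 <= h^+2.
  rewrite -real_normK ?num_real //; apply: lerXn2r => //; rewrite nnegrE //.
  exact: le_trans hz.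
lra.
Qed.

Lemma sin_bnd {R : realType} (z h : R) : `|z| <= h -> `|sin z| <= h.
Proof. by move=> hz; apply: le_trans (sin_le_abs z) hz. Qed.

Lemma u_bnd {R : realType} (t p a t' p' a' e : R) : 0 <= e -> e^+2 <= 4 ->
  `|t - t'| <= e -> `|p - p'| <= e -> `|a - a'| <= e ->
  (1 - (e/2)^+2/2)^+3 - (e/2)^+2 <= qdot (quat t p a) (quat t' p' a').
Proof.
move=> e0 e4 ht hp ha; rewrite lemU.
set h := e/2.
have h0 : 0 <= h by rewrite /h divr_ge0.
set k := 1 - h^+2/2.
have h1 : h^+2 <= 1.
  have -> : h^+2 = e^+2 / 4 by rewrite /h expr_div_n; congr (_ / _); rewrite expr2 -natrM.
  by rewrite ler_pdivrMr // mul1r.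
have k0 : 0 <= k by rewrite /k; lra.
have Cp := @cos_bnd _ _ _ (@half_bnd _ _ _ _ hp); have Ct := @cos_bnd _ _ _ (@half_bnd _ _ _ _ ht); have Ca := @cos_bnd _ _ _ (@half_bnd _ _ _ _ ha).
rewrite -/h -/k in Cp Ct Ca.
have St := @sin_bnd _ _ _ (@half_bnd _ _ _ _ ht); have Sa := @sin_bnd _ _ _ (@half_bnd _ _ _ _ ha).
rewrite -/h in St Sa.
have P1 : k * k * k <= cos (p/2 - p'/2) * cos (t/2 - t'/2) * cos (a/2 - a'/2).
  apply: ler_pM; rewrite ?mulr_ge0 //; apply: ler_pM => //.
have P2 : `|cos (p/2 + p'/2) * sin (t/2 - t'/2) * sin (a/2 - a'/2)| <= h * h.
  rewrite !normrM -[h * h]mul1r mulrA.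
  apply: ler_pM; rewrite ?mulr_ge0 //; apply: ler_pM => //; apply: cos_max.
move: P2; rewrite ler_norml => /andP[P2 _].
have -> : k^+3 = k * k * k by rewrite !exprS expr0 mulr1 mulrA.
rewrite expr2; lra.
Qed.

Lemma polyL {R : realType} (e : R) : 0 < e -> 5 * e^+2 <= 4 ->
  let L := (1 - (e/2)^+2/2)^+3 - (e/2)^+2 in
  0 <= L /\ L <= 1 /\ 4 * (1 - L^+2) < 5 * e^+2.
Proof.
move=> e0 e5 L.
set x := e^+2 / 8.
have E1 : (e/2)^+2/2 = x by rewrite /x; field.
have E2 : (e/2)^+2 = 2 * x by rewrite /x; field.
have E3 : e^+2 = 8 * x by rewrite /x; field.
have x0 : 0 < x by rewrite /x divr_gt0 // exprn_gt0.
have x1 : x <= 1/10 by move: e5; rewrite E3; lra.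
have LE : L = (1 - x)^+3 - 2 * x by rewrite /L E1 E2.
rewrite E3 LE.
have c1 : 0 <= 1 - x by lra.
have c2 : (1 - x)^+3 <= 1.
  by rewrite exprn_ile1 //; lra.
have c3 : 729/1000 <= (1 - x)^+3.
  have -> : (729/1000 : R) = (9/10)^+3 by rewrite !exprS expr0; field.
  by rewrite lerXn2r // ?nnegrE //; lra.
have x3 : x^+3 <= x.
  have : x^+2 <= 1 by rewrite exprn_ile1 //; lra.
  move=> h; rewrite exprS; rewrite -[X in _ <= X]mulr1; apply: ler_wpM2l; lra.
split; first by lra.
split; first by lra.
have G : 0 < 31 - 32 * x + 19 * x^+2 - 6 * x^+3 + x^+4.
  have : 0 <= x^+2 by apply: sqr_ge0.
  have : 0 <= x^+4 by rewrite exprn_ge0 // ltW.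
  lra.
have : 0 < x^+2 * (31 - 32 * x + 19 * x^+2 - 6 * x^+3 + x^+4).
  by rewrite mulr_gt0 // exprn_gt0.
have -> : x^+2 * (31 - 32 * x + 19 * x^+2 - 6 * x^+3 + x^+4) =
  ((1 - x)^+3 - 2 * x)^+2 - 1 + 10 * x by ring.
lra.
Qed.

Theorem lemma3p8 (R : realType) (eps t t' p p' a a' : R) :
  0 < eps ->
  `|t - t'| <= eps -> `|p - p'| <= eps -> `|a - a'| <= eps ->
  opnorm (rotR a *m Mtp t p - rotR a' *m Mtp t' p') < Num.sqrt 5 * eps.
Proof.
move=> e0 ht hp ha.
set u := qdot (quat t p a) (quat t' p' a').
have K y0 y1 := @lemK _ t p a t' p' a' y0 y1.
rewrite -/u in K.
have Se : Num.sqrt 5 * eps = Num.sqrt (5 * eps^+2).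
  by rewrite sqrtrM // sqrtr_sqr gtr0_norm.
rewrite Se.
have [big|small] := ltP 4 (5 * eps^+2).
- apply: (le_lt_trans (@opnorm_le _ t p a t' p' a' 2 _ _)) => //.
    move=> y0 y1; have := K y0 y1.
    have : 0 <= u^+2 by apply: sqr_ge0.
    have : 0 <= y0^+2 + y1^+2 by rewrite addr_ge0 ?sqr_ge0.
    nra.
  have S4 : Num.sqrt (2^+2) = 2 :> R by rewrite sqrtr_sqr ger0_norm.
  rewrite -S4 ltr_sqrt; last by lra.
  have : (2:R)^+2 = 4 by rewrite expr2; lra.
  lra.
- have e4 : eps^+2 <= 4 by lra.
  have Lu := @u_bnd _ t p a t' p' a' eps (ltW e0) e4 ht hp ha.
  rewrite -/u in Lu.
  have [L0 [L1 L5]] := @polyL _ eps e0 small.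
  set L := (1 - (eps/2)^+2/2)^+3 - (eps/2)^+2 in Lu L0 L1 L5.
  have B0 : 0 <= 4 * (1 - L^+2) by nra.
  apply: (le_lt_trans (@opnorm_le _ t p a t' p' a' (Num.sqrt (4 * (1 - L^+2))) _ _)).
  + exact: sqrtr_ge0.
  + move=> y0 y1; rewrite sqr_sqrtr //; have := K y0 y1.
    have : 0 <= y0^+2 + y1^+2 by rewrite addr_ge0 ?sqr_ge0.
    have : L^+2 <= u^+2 by rewrite lerXn2r // ?nnegrE //; apply: le_trans Lu.
    nra.
  + by rewrite ltr_sqrt // (le_lt_trans B0 L5).
Qed.
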